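(* Let $W,M$ be disjoint with $|W|=|M|=n$ and let $\mu$ be a fixed perfect marriage between $W$ and $M$. The randomized two-party communication complexity of determining whether $\mu$ is stable with respect to $\succ_W,\succ_M$, where Alice holds the women's full preference profile $\succ_W$ and Bob holds the men's full preference profile $\succ_M$, is $\Omega(n^2)$.
   Context: A full preference profile of the women gives each woman a total order on $M$; that of the men gives each man a total order on $W$. A perfect marriage is a bijection between $W$ and $M$. A pair $(w,m)$ is blocking for $\mu$ if $w$ prefers $m$ to her spouse in $\mu$ and $m$ prefers $w$ to his spouse in $\mu$; $\mu$ is stable if it has no blocking pair. In two-party communication complexity, the cost of a protocol is the number of bits exchanged in the worst case; a randomized protocol must answer correctly with probability at least $2/3$ on every input; the complexity is the least cost of such a protocol. The bound is asymptotic in $n$. *)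

(* Defs.v *)
From HB Require Import structures.
From mathcomp Require Import all_boot all_order all_algebra all_fingroup.
From mathcomp Require Import reals.
Set Implicit Arguments. Unset Strict Implicit. Unset Printing Implicit Defensive.
Import Order.TTheory GRing.Theory Num.Theory.

(* Women and men are two disjoint copies of 'I_n.  A preference order of one
   agent on the n agents of the other side is a ranking, i.e. a permutation
   [r : {perm 'I_n}]; the agent prefers [a] to [b] iff [r a < r b]
   (rank 0 = most preferred).  This is exactly a total order on 'I_n. *)
Definition ranking n := {perm 'I_n}.
Definition prefers n (r : ranking n) (a b : 'I_n) : bool := r a < r b.

Definition women_profile n := {ffun 'I_n -> ranking n}. (* woman -> order on men *)
Definition men_profile n := {ffun 'I_n -> ranking n}.   (* man -> order on women *)

(* a perfect marriage: bijection woman |-> her husband *)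
Definition marriage n := {perm 'I_n}.

Definition blocking n (mu : marriage n) (PW : women_profile n) (PM : men_profile n)
  (w m : 'I_n) : bool :=
  prefers (PW w) m (mu w) && prefers (PM m) w ((mu^-1)%g m).

Definition stable n (mu : marriage n) (PW : women_profile n) (PM : men_profile n) : bool :=
  [forall w, forall m, ~~ blocking mu PW PM w m].

(* A deterministic protocol tree: at an Alice node Alice sends a bit that is a
   function of her input x, at a Bob node Bob sends a bit depending on y;
   the history is encoded by the position in the tree; leaves output. *)
Inductive protocol (X Y : Type) : Type :=
| PLeaf of bool
| PAlice of (X -> bool) & protocol X Y & protocol X Y
| PBob of (Y -> bool) & protocol X Y & protocol X Y.
Arguments PLeaf {X Y}.

Fixpoint run X Y (p : protocol X Y) (x : X) (y : Y) : bool :=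
  match p with
  | PLeaf b => b
  | PAlice f p0 p1 => if f x then run p1 x y else run p0 x y
  | PBob g p0 p1 => if g y then run p1 x y else run p0 x y
  end.

Fixpoint depth X Y (p : protocol X Y) : nat :=
  match p with
  | PLeaf _ => 0
  | PAlice _ p0 p1 => (maxn (depth p0) (depth p1)).+1
  | PBob _ p0 p1 => (maxn (depth p0) (depth p1)).+1
  end.

(* A (public-coin) randomized protocol: a finitely supported probability
   distribution over deterministic protocols, given as a list of
   (probability, protocol) pairs. *)
Definition rprotocol (R : realType) X Y := seq (R * protocol X Y).

Definition is_distribution (R : realType) X Y (P : rprotocol R X Y) : Prop :=
  all (fun q => 0 <= q.1)%R P /\ (\sum_(q <- P) q.1 = 1)%R.

(* cost = worst-case number of bits over all coin outcomes and inputs *)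
Definition rcost (R : realType) X Y (P : rprotocol R X Y) : nat :=
  \max_(q <- P) depth q.2.

Definition success_prob (R : realType) X Y (P : rprotocol R X Y)
  (f : X -> Y -> bool) (x : X) (y : Y) : R :=
  (\sum_(q <- P | run q.2 x y == f x y) q.1)%R.

Definition rcomputes (R : realType) X Y (P : rprotocol R X Y) (f : X -> Y -> bool) : Prop :=
  is_distribution P /\ forall x y, (2 / 3 <= success_prob P f x y)%R.

(* Main.v *)
Require Import Defs.
From HB Require Import structures.
From mathcomp Require Import all_boot all_order all_algebra all_fingroup.
From mathcomp Require Import reals.
From mathcomp Require Import ring lra zify.
Set Implicit Arguments. Unset Strict Implicit. Unset Printing Implicit Defensive.
Import Order.TTheory GRing.Theory Num.Theory.
Local Open Scope ring_scope.
Lemma card_sumR (R : realType) (T : finType) (A : {set T}) (P : pred T) :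
  (#|[set x in A | P x]|%:R : R) = \sum_(x in A) (P x)%:R.
Proof.
rewrite -sum1_card natr_sum [LHS]big_mkcond [RHS]big_mkcond /=.
apply: eq_bigr => x _; rewrite inE; case: (x \in A); case: (P x) => //.
Qed.

Lemma sum_split_ge (R : realType) (T : finType) (A : {set T}) (P : pred T) (F : T -> R) :
  (forall x, x \in A -> 0 <= F x) ->
  \sum_(x in A | P x) F x <= \sum_(x in A) F x.
Proof.
move=> F0; rewrite [X in _ <= X](bigID P) /= lerDl; apply: sumr_ge0 => x /andP[xA _]; exact: F0.
Qed.
Lemma gen_sum (R : realType) (V : finType) (U J : {set V}) (mu : R) :
  J \subset U ->
  \sum_(x : {set V} | x \subset U) mu ^+ #|x :&: J| = (1 + mu) ^+ #|J| * 2 ^+ (#|U| - #|J|).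
Proof.
move=> JU.
pose F := fun i => if i \in J then mu else if i \in U then 1 else (0 : R).
have h1 : \prod_i (F i + 1) = \sum_(x : {set V}) \prod_i (if i \in x then F i else 1).
  by rewrite bigA_distr.
have h2 : forall x : {set V}, \prod_i (if i \in x then F i else 1) =
    if x \subset U then mu ^+ #|x :&: J| else 0.
  move=> x; rewrite -big_mkcond /=.
  case: ifP => xU.
    rewrite (bigID (fun i => i \in J)) /= [X in _ * X]big1 ?mulr1; last first.
      by move=> i /andP[ix iJ]; rewrite /F (negbTE iJ) (subsetP xU i ix).
    rewrite (eq_bigr (fun _ => mu)); last by move=> i /andP[_ iJ]; rewrite /F iJ.
    rewrite (eq_bigl (fun i => i \in x :&: J)) ?prodr_const // => i; by rewrite inE.
  have /subsetPn[i ix iU] : ~~ (x \subset U) by rewrite xU.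
  rewrite (bigD1 i) //= /F (negbTE iU).
  have -> : (i \in J) = false by apply/negbTE; apply: contra iU; apply: (subsetP JU).
  by rewrite mul0r.
rewrite [RHS](_ : _ = \prod_i (F i + 1)); last first.
  rewrite (bigID (fun i => i \in J)) /=.
  rewrite (eq_bigr (fun _ => 1 + mu)); last by move=> i iJ; rewrite /F iJ addrC.
  rewrite prodr_const; congr (_ * _).
  rewrite (bigID (fun i => i \in U)) /= [X in _ * X]big1 ?mulr1; last first.
    by move=> i /andP[iJ iU]; rewrite /F (negbTE iJ) (negbTE iU) add0r.
  have -> : \prod_(i | (i \notin J) && (i \in U)) (F i + 1) = \prod_(i in U :\: J) (2 : R).
    apply: eq_big => i; first by rewrite !inE andbC.
    by move=> /andP[iJ iU]; rewrite /F (negbTE iJ) iU.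
  by rewrite prodr_const cardsD (setIidPr JU).
rewrite h1 [LHS]big_mkcond /=; apply: eq_bigr => x _; by rewrite h2.
Qed.
Lemma KL (R : realType) (V : finType) (l k : nat) (U J : {set V}) (S : {set {set V}}) :
  #|U| = (2 * l)%N -> J \subset U -> #|J| = (15 * k)%N -> (0 < k)%N ->
  (forall x, x \in S -> x \subset U) ->
  (forall i, i \in J -> 20 * (#|[set x in S | i \in x]|%:R : R) < 9 * #|S|%:R) ->
  #|S|%:R * (9/10 : R)^+(7 * k) <= 28 * 4^+l * (19/20)^+(15 * k).
Proof.
move=> cU JU cJ k0 SU bad.
set sz : R := #|S|%:R.
have e1 : \sum_(i in J) (#|[set x in S | i \in x]|%:R : R) = \sum_(x in S) (#|x :&: J|%:R).
  under eq_bigr do rewrite card_sumR.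
  rewrite exchange_big /=; apply: eq_bigr => x _.
  rewrite (_ : x :&: J = [set i in J | i \in x]) ?card_sumR //.
  by apply/setP => i; rewrite !inE andbC.
have e2 : 20 * \sum_(i in J) (#|[set x in S | i \in x]|%:R : R) <= 9 * (15 * k)%:R * sz.
  rewrite mulr_sumr; apply: (@le_trans _ _ (\sum_(i in J) (9 * sz))).
    by apply: ler_sum => i iJ; apply: ltW; apply: bad.
  rewrite sumr_const cJ -(mulr_natr (9 * sz)); lra.
set m : R := \sum_(x in S | (#|x :&: J| < 7 * k)%N) 1.
have e3 : (7 * k)%:R * (sz - m) <= \sum_(x in S) (#|x :&: J|%:R : R).
  have -> : sz - m = \sum_(x in S | ~~ (#|x :&: J| < 7 * k)%N) 1.
    by rewrite /sz /m -sumr_const (bigID (fun x => (#|x :&: J| < 7 * k)%N)) /= addrC addrK.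
  rewrite mulr_sumr [X in _ <= X](bigID (fun x => (#|x :&: J| < 7 * k)%N)) /=.
  rewrite -[X in X <= _]add0r; apply: lerD.
    by apply: sumr_ge0 => x _; apply: ler0n.
  apply: ler_sum => x /andP[_]; rewrite -leqNgt mulr1 => h.
  by rewrite ler_nat.
have e4 : sz <= 28 * m.
  have kp : (0 : R) < k%:R by rewrite ltr0n.
  move: e2 e3; rewrite e1 !natrM => e2 e3.
  have : (20 * 7) * k%:R * (sz - m) <= 135 * k%:R * sz by nra.
  by move=> h; nra.
have m0 : 0 <= m by apply: sumr_ge0 => x _; apply: ler01.
have e5 : m * (9/10 : R)^+(7 * k) <= (1 + 9/10)^+(15 * k) * 2^+(2 * l - 15 * k).
  rewrite -cU -cJ -gen_sum //.
  rewrite /m mulr_suml; apply: (@le_trans _ _ (\sum_(x in S | (#|x :&: J| < 7 * k)%N) (9/10 : R)^+#|x :&: J|)).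
    apply: ler_sum => x /andP[_ h]; rewrite mul1r; apply: ler_wiXn2l; [lra|lra|exact: ltnW h].
  rewrite [X in X <= _]big_mkcond [X in _ <= X]big_mkcond /=.
  apply: ler_sum => x _; case: ifP => [/andP[xS _]|_].
    by rewrite (SU x xS).
  by case: ifP => _ //; apply: exprn_ge0; lra.
have ekl : (15 * k <= 2 * l)%N by rewrite -cJ -cU; apply: subset_leq_card.
have e6 : (1 + 9/10 : R)^+(15 * k) * 2^+(2 * l - 15 * k) = 4^+l * (19/20)^+(15 * k).
  have -> : (1 + 9/10 : R) = (19/20) * 2 by lra.
  rewrite exprMn -mulrA -exprD subnKC // mulrC; congr (_ * _).
  by rewrite exprM expr2; congr (_ ^+ _); lra.
have p0 : (0 : R) <= (9/10)^+(7 * k) by apply: exprn_ge0; lra.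
apply: (@le_trans _ _ (28 * m * (9/10)^+(7 * k))).
  by apply: ler_wpM2r.
by rewrite -[X in _ <= X]mulrA -e6 -mulrA ler_wpM2l //; lra.
Qed.
Lemma exists_subset_card (T : finType) (A : {set T}) (k : nat) :
  (k <= #|A|)%N -> exists2 B : {set T}, B \subset A & #|B| = k.
Proof.
elim: k => [|k IH] hk; first by exists set0; rewrite ?sub0set ?cards0.
have [B BA cB] := IH (ltnW hk).
have : (0 < #|A :\: B|)%N by rewrite cardsD (setIidPr BA) cB subn_gt0.
case/card_gt0P => x; rewrite inE => /andP[xB xA].
exists (x |: B); first by rewrite subUset sub1set xA BA.
by rewrite cardsU1 xB cB.
Qed.

Lemma reindex_compl (R : realType) (V : finType) (U : {set V}) (g : {set V} -> R) :
  (0 < #|U|)%N ->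
  \sum_(P : {set V} | (#|P| == #|U|.-1) && (P \subset U)) g P = \sum_(i in U) g (U :\ i).
Proof.
move=> U0.
have inj : {in U &, injective (fun i => U :\ i)}.
  move=> i j iU jU /= e; case: (eqVneq i j) => // ij.
  have : i \in U :\ j by rewrite !inE ij iU.
  by rewrite -e !inE eqxx.
rewrite -(big_imset g inj) /=.
apply: eq_bigl => P; apply/andP/imsetP.
  case=> /eqP cP PU.
  have : #|U :\: P| == 1%N.
    rewrite cardsD (setIidPr PU) cP.
    by move: U0; case: #|U| => // n _; rewrite /= subSn // subnn.
  case/cards1P => i ei; exists i.
    have : i \in U :\: P by rewrite ei set11.
    by rewrite inE => /andP[].
  apply/setP => j; rewrite !inE.
  have := congr1 (fun X : {set V} => j \in X) ei; rewrite !inE.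
  by case: (j \in P) (subsetP PU j) => [-> // | _]; case: (j \in U) => //= <-.
case=> i iU ->; split; last by apply: subsetDl.
by rewrite (cardsD1 i U) iU.
Qed.
Lemma sum1R (R : realType) (T : finType) (P : pred T) :
  \sum_(x | P x) (1 : R) = #|[set x | P x]|%:R.
Proof. by rewrite -sumr_const; apply: eq_bigl => x; rewrite inE. Qed.

Definition ok0 (l : nat) (V : finType) (P x : {set V}) := (x \subset P) && (#|x| == l).
Definition ok1 (l : nat) (V : finType) (P Q x : {set V}) :=
  [&& x \subset ~: Q, #|x| == l & ~~ (x \subset P)].
Definition okE (l : nat) (V : finType) (e : bool) (P Q x : {set V}) :=
  if e then ok1 l P Q x else ok0 l P x.
Definition cnt (R : realType) (l : nat) (V : finType) (e : bool) (F : pred {set V})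
  (P Q : {set V}) : R := \sum_(x | okE l e P Q x && F x) 1.
Definition validT (l : nat) (V : finType) (TA TB : {set V}) :=
  [&& #|TA| == (2 * l).-1, #|TB| == (2 * l).-1 & [disjoint TA & TB]].
Definition badS (R : realType) (l : nat) (V : finType) (F : pred {set V}) (P Q : {set V}) :=
  20 * cnt R l true F P Q < 9 * (cnt R l false F P Q + cnt R l true F P Q).
Definition B0 (R : realType) (l k : nat) : R :=
  28 * 4 ^+ l * (19/20) ^+ (15 * k) / (9/10) ^+ (7 * k).

Lemma side (R : realType) (V : finType) (l k : nat) (F : pred {set V}) (Q : {set V}) :
  (0 < l)%N -> #|V| = (4 * l).-1 -> (0 < k)%N -> (300 * k <= l)%N ->
  #|Q| = (2 * l).-1 ->
  \sum_(P | validT l P Q && badS R l F P Q) cnt R l false F P Q <=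
  1/20 * \sum_(P | validT l P Q) cnt R l false F P Q + l%:R * B0 R l k.
Proof.
move=> l0 cV k0 kl cQ.
set U := ~: Q.
have cU : #|U| = (2 * l)%N by rewrite cardsCs setCK cV cQ; lia.
have eV : forall P : {set V}, validT l P Q = (#|P| == #|U|.-1) && (P \subset U).
  by move=> P; rewrite /validT cQ eqxx cU disjoints_subset.
set S := [set x : {set V} | [&& x \subset U, #|x| == l & F x]].
have c0 : forall i, cnt R l false F (U :\ i) Q = #|[set x in S | i \notin x]|%:R.
  move=> i; rewrite /cnt sum1R; congr (_%:R); apply: eq_card => x.
  rewrite !inE /okE /ok0 subsetD1.
  by case: (x \subset U); case: (i \in x); case: (#|x| == l); case: (F x).
have c1 : forall i, cnt R l true F (U :\ i) Q = #|[set x in S | i \in x]|%:R.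
  move=> i; rewrite /cnt sum1R; congr (_%:R); apply: eq_card => x.
  rewrite !inE /okE /ok1 subsetD1 -/U.
  by case: (x \subset U); case: (i \in x); case: (#|x| == l); case: (F x).
have c01 : forall i, cnt R l false F (U :\ i) Q + cnt R l true F (U :\ i) Q = #|S|%:R.
  move=> i; rewrite c0 c1 -natrD; congr (_%:R).
  rewrite -(cardsID [set x : {set V} | i \in x] S) addnC; congr (_ + _); apply: eq_card => x;
  by rewrite !inE andbC.
have U0 : (0 < #|U|)%N by rewrite cU; lia.
rewrite big_mkcondr /= (eq_bigl _ _ eV) (@reindex_compl R V U _ U0).
rewrite (eq_bigl _ _ eV) (@reindex_compl R V U _ U0) /=.
match goal with |- is_true (_ <= _ * ?g + _) => have tot : g = l%:R * #|S|%:R end.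
  under eq_bigr do rewrite c0 card_sumR.
  rewrite exchange_big /= (eq_bigr (fun _ => (l%:R : R))); first by rewrite sumr_const -(mulr_natr (l%:R : R)).
  move=> x xS.
  rewrite -card_sumR (_ : [set i in U | i \notin x] = U :\: x); last first.
    by apply/setP => i; rewrite !inE andbC.
  move: xS; rewrite inE => /and3P[xU /eqP cx _].
  by rewrite cardsD (setIidPr xU) cU cx; congr (_%:R); lia.
rewrite tot.
set Jb := [set i in U | 20 * (#|[set x in S | i \in x]|%:R : R) < 9 * #|S|%:R].
have ebad : forall i, i \in U -> badS R l F (U :\ i) Q = (i \in Jb).
  by move=> i iU; rewrite /badS c01 c1 inE iU.
rewrite (eq_bigr (fun i => if i \in Jb then cnt R l false F (U :\ i) Q else 0)); last first.
  by move=> i iU; rewrite ebad.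
rewrite -big_mkcondr /=.
have pos : forall i, 0 <= cnt R l false F (U :\ i) Q by move=> i; rewrite c0 ler0n.
have Sl : (0 : R) <= #|S|%:R by apply: ler0n.
have le1 : \sum_(i in U | i \in Jb) cnt R l false F (U :\ i) Q <= #|Jb|%:R * #|S|%:R.
  apply: (@le_trans _ _ (\sum_(i in Jb) (#|S|%:R : R))); last by rewrite sumr_const mulr_natl.
  rewrite (eq_bigl (fun i => i \in Jb)); last first.
    by move=> i; rewrite andbC; case: (boolP (i \in Jb)) => //; rewrite inE => /andP[->].
  apply: ler_sum => i _; rewrite -(c01 i) lerDl.
  by rewrite /cnt; apply: sumr_ge0 => x _; apply: ler01.
have B0pos : 0 <= B0 R l k.
  rewrite /B0; apply: divr_ge0; last by apply: exprn_ge0; lra.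
  by apply: mulr_ge0; [apply: mulr_ge0; [lra|apply: exprn_ge0; lra] | apply: exprn_ge0; lra].
have l0R : (0 : R) <= l%:R by apply: ler0n.
case: (ltnP #|Jb| (15 * k)) => hJ.
  apply: (le_trans le1); rewrite -[X in X <= _]addr0; apply: lerD; last by apply: mulr_ge0.
  have : (#|Jb|%:R : R) <= l%:R / 20.
    have : (20 * #|Jb| <= l)%N by lia.
    by rewrite -(ler_nat R) natrM => h; lra.
  by move=> h; nra.
have [J JJb cJ] := exists_subset_card hJ.
have JU : J \subset U by apply: (subset_trans JJb); apply/subsetP => i; rewrite inE => /andP[].
have hS := @KL R V l k U J S cU JU cJ k0.
have : #|S|%:R * (9 / 10 : R) ^+ (7 * k) <= 28 * 4 ^+ l * (19 / 20) ^+ (15 * k).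
  apply: hS; first by move=> x; rewrite inE => /and3P[].
  by move=> i iJ; have := subsetP JJb i iJ; rewrite inE => /andP[].
move=> hS'.
have SB : (#|S|%:R : R) <= B0 R l k.
  rewrite /B0 ler_pdivlMr; first exact: hS'.
  by apply: exprn_gt0; lra.
apply: (@le_trans _ _ (l%:R * #|S|%:R)).
  rewrite -tot; apply: sum_split_ge => i _; exact: pos.
have : 0 <= 1 / 20 * (l%:R * (#|S|%:R : R)) by apply: mulr_ge0; [lra | apply: mulr_ge0].
by move=> h; nra.
Qed.
Lemma bin_step n m : (m.+1 <= n - m)%N -> ('C(n, m) <= 'C(n, m.+1))%N.
Proof.
move=> h; have e := mul_bin_left n m.
have : (m.+1 * 'C(n, m) <= m.+1 * 'C(n, m.+1))%N.
  rewrite e; apply: leq_mul => //.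
by rewrite leq_pmul2l.
Qed.

Lemma bin_le_mid l i : ('C(2 * l, i) <= 'C(2 * l, l))%N.
Proof.
have low : forall j, (j <= l)%N -> ('C(2 * l, l - j) <= 'C(2 * l, l))%N.
  elim=> [|j IH] hj; first by rewrite subn0.
  apply: leq_trans (IH (ltnW hj)).
  have -> : (l - j = (l - j.+1).+1)%N by lia.
  apply: bin_step; lia.
case: (leqP i l) => hi.
  by have := low (l - i)%N (leq_subr _ _); rewrite subKn.
case: (leqP i (2 * l)) => hi2; last by rewrite bin_small.
rewrite -bin_sub //.
by have := low (i - l)%N (ltac:(lia)); have -> : (l - (i - l) = 2 * l - i)%N by lia.
Qed.

Lemma bin_bound l : (4 ^ l <= (2 * l).+1 * 'C(2 * l, l))%N.
Proof.
have -> : (4 ^ l = (1 + 1) ^ (2 * l))%N by rewrite expnM.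
rewrite expnDn.
apply: leq_trans (_ : \sum_(i < (2 * l).+1) 'C(2 * l, l) <= _)%N.
  by apply: leq_sum => i _; rewrite !exp1n !muln1; apply: bin_le_mid.
by rewrite sum_nat_const card_ord.
Qed.

Lemma bin_half l : (0 < l)%N -> ('C((2 * l).-1, l) * 2 = 'C(2 * l, l))%N.
Proof.
move=> l0.
have e1 : (2 * l = ((2 * l).-1).+1)%N by lia.
have e2 : (l = (l.-1).+1)%N by lia.
rewrite [in RHS]e1 [in RHS]e2 binS -e2.
have -> : 'C((2 * l).-1, l.-1) = 'C((2 * l).-1, l).
  rewrite -bin_sub; last by lia.
  by congr 'C(_, _); lia.
by rewrite muln2 addnn.
Qed.
Lemma exch (R : realType) (T : finType) (P : T -> T -> bool) (f : T -> T -> R) :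
  \sum_(a : T) \sum_(b | P a b) f a b = \sum_(b : T) \sum_(a | P a b) f a b.
Proof.
under eq_bigr do rewrite big_mkcond.
rewrite exchange_big; apply: eq_bigr => b _; by rewrite [RHS]big_mkcond.
Qed.

Definition Mes (R : realType) (l : nat) (V : finType) (e : bool)
  (E : {set V} -> {set V} -> bool) : R :=
  \sum_(TA : {set V}) \sum_(TB | validT l TA TB)
    \sum_(x | okE l e TA TB x) \sum_(y | okE l e TB TA y) (E x y)%:R.

Lemma cnt_ge0 (R : realType) l (V : finType) e F (P Q : {set V}) : 0 <= cnt R l e F P Q.
Proof. by apply: sumr_ge0 => x _; apply: ler01. Qed.

Lemma valid_sym l (V : finType) (TA TB : {set V}) : validT l TA TB = validT l TB TA.
Proof. by rewrite /validT disjoint_sym; case: (#|TA| == _); case: (#|TB| == _). Qed.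

Lemma valid_card l (V : finType) (TA TB : {set V}) :
  validT l TA TB -> #|TA| = (2 * l).-1 /\ #|TB| = (2 * l).-1.
Proof. by case/and3P => /eqP -> /eqP ->. Qed.

Lemma Mes_rect (R : realType) l (V : finType) e (A B : pred {set V}) :
  Mes R l e (fun x y => A x && B y) =
  \sum_(TA : {set V}) \sum_(TB | validT l TA TB) cnt R l e A TA TB * cnt R l e B TB TA.
Proof.
apply: eq_bigr => TA _; apply: eq_bigr => TB _.
rewrite /cnt big_distrlr /= [RHS]big_mkcondr /=; apply: eq_bigr => x _.
case: (A x) => /=; last by rewrite big1.
rewrite [RHS]big_mkcondr /=; apply: eq_bigr => y _.
by case: (B y); rewrite /= ?mulr1.
Qed.

Lemma cnt_false_Q (R : realType) l (V : finType) F (P Q Q' : {set V}) :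
  cnt R l false F P Q = cnt R l false F P Q'.
Proof. by []. Qed.

Lemma cnt_le0 (R : realType) l (V : finType) F (P Q : {set V}) :
  cnt R l false F P Q <= 'C(#|P|, l)%:R.
Proof.
rewrite /cnt sum1R -cards_draws ler_nat; apply: subset_leq_card.
by apply/subsetP => x; rewrite !inE /okE /ok0 => /andP[/andP[-> ->]].
Qed.

Lemma cnt_full0 (R : realType) l (V : finType) (P Q : {set V}) :
  cnt R l false xpredT P Q = 'C(#|P|, l)%:R.
Proof.
rewrite /cnt sum1R -cards_draws; congr (_%:R); apply: eq_card => x.
by rewrite !inE /okE /ok0 andbT.
Qed.
Section Main.
Variables (R : realType) (V : finType) (l k : nat).
Hypotheses (l0 : (0 < l)%N) (cV : #|V| = (4 * l).-1) (k0 : (0 < k)%N) (kl : (300 * k <= l)%N).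

Local Notation l2 := ((2 * l).-1).
Local Notation c := ('C((2 * l).-1, l)%:R : R).

Lemma cardC_l2 (Q : {set V}) : #|Q| = l2 -> #|~: Q| = (2 * l)%N.
Proof. by move=> cQ; rewrite cardsCs setCK cV cQ; lia. Qed.

Lemma cnt_full1 (TA TB : {set V}) : validT l TA TB -> cnt R l true xpredT TA TB = c.
Proof.
case/and3P => /eqP cA /eqP cB; rewrite disjoints_subset => AB.
set D1 := [set x : {set V} | x \subset ~: TB & #|x| == l].
set D2 := [set x : {set V} | x \subset TA & #|x| == l].
have D21 : D2 \subset D1.
  apply/subsetP => x; rewrite !inE => /andP[xA ->]; by rewrite (subset_trans xA AB).
have -> : cnt R l true xpredT TA TB = #|D1 :\: D2|%:R.
  rewrite /cnt sum1R; congr (_%:R); apply: eq_card => x.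
  rewrite !inE /okE /ok1 andbT.
  by case: (x \subset ~: TB); case: (x \subset TA); case: (#|x| == l).
rewrite cardsD (setIidPr D21) /D1 /D2 !cards_draws (cardC_l2 cB) cA.
by rewrite -(bin_half l0); congr (_%:R); lia.
Qed.

Lemma count_TA (TB : {set V}) : #|TB| = l2 -> #|[set TA : {set V} | validT l TA TB]| = (2 * l)%N.
Proof.
move=> cB.
rewrite (_ : [set TA : {set V} | validT l TA TB] = [set TA : {set V} | TA \subset ~: TB & #|TA| == l2]).
  rewrite cards_draws (cardC_l2 cB).
  have -> : (2 * l = l2.+1)%N by lia.
  by rewrite binSn.
apply/setP => TA; rewrite !inE /validT cB eqxx disjoints_subset.
by case: (_ \subset _); case: (#|TA| == _).
Qed.

Lemma sum_const_T (f : R) :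
  \sum_(TA : {set V}) \sum_(TB | validT l TA TB) f =
  \sum_(TB : {set V} | #|TB| == l2) (2 * l)%:R * f.
Proof.
rewrite exch (bigID (fun TB : {set V} => #|TB| == l2)) /= [X in _ + X]big1 ?addr0.
  apply: eq_bigr => TB /eqP cB.
  rewrite -(count_TA cB) sumr_const mulr_natl; congr (_ *+ _); apply: eq_card => TA; by rewrite inE.
move=> TB cB; rewrite big_pred0 // => TA; apply/negbTE; apply: contra cB.
by case/valid_card => _ ->.
Qed.

Lemma Zfull e :
  Mes R l e (fun _ _ : {set V} => true) = \sum_(TB : {set V} | #|TB| == l2) (2 * l)%:R * (c * c).
Proof.
rewrite -sum_const_T.
have := Mes_rect R l e (fun _ : {set V} => true) (fun _ : {set V} => true); rewrite /= => ->.
apply: eq_bigr => TA _; apply: eq_bigr => TB vT.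
case: e.
  by rewrite !cnt_full1 // valid_sym.
by rewrite !cnt_full0; case/valid_card: vT => -> ->.
Qed.

Lemma B0_ge0 : 0 <= B0 R l k.
Proof.
rewrite /B0; apply: divr_ge0; last by apply: exprn_ge0; lra.
by apply: mulr_ge0; [apply: mulr_ge0; [lra|apply: exprn_ge0; lra] | apply: exprn_ge0; lra].
Qed.

Lemma badbound (F G : pred {set V}) :
  \sum_(P : {set V}) \sum_(Q | validT l P Q)
     (if badS R l F P Q then cnt R l false F P Q * cnt R l false G Q P else 0)
  <= 1/20 * \sum_(P : {set V}) \sum_(Q | validT l P Q) cnt R l false F P Q * cnt R l false G Q P
     + l%:R * B0 R l k * \sum_(Q : {set V} | #|Q| == l2) c.
Proof.
rewrite exch [X in _ <= 1/20 * X + _]exch mulr_sumr [X in _ <= _ + X]mulr_sumr.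
rewrite [X in _ <= _ + X]big_mkcond /= -big_split /=.
apply: ler_sum => Q _.
case: (boolP (#|Q| == l2)) => cQ; last first.
  have P0 : forall P, validT l P Q = false.
    by move=> P; apply/negbTE; apply: contra cQ; case/valid_card => _ ->.
  by rewrite !big_pred0 // mulr0 addr0.
set bQ := cnt R l false G Q set0.
have eb : forall P, cnt R l false G Q P = bQ by [].
under eq_bigr do rewrite eb.
under [X in _ <= _ * X + _]eq_bigr do rewrite eb.
rewrite -big_mkcondr /= -!mulr_suml.
have hs := @side R V l k F Q l0 cV k0 kl (eqP cQ).
have b0 : 0 <= bQ by apply: cnt_ge0.
have bc : bQ <= c by have := cnt_le0 R l G Q set0; rewrite (eqP cQ).
have s0 : 0 <= \sum_(P | validT l P Q && badS R l F P Q) cnt R l false F P Q.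
  by apply: sumr_ge0 => P _; apply: cnt_ge0.
have lB : 0 <= l%:R * B0 R l k by apply: mulr_ge0; [apply: ler0n | apply: B0_ge0].
nra.
Qed.
Lemma swapT (f : {set V} -> {set V} -> R) :
  \sum_(TA : {set V}) \sum_(TB | validT l TA TB) f TA TB =
  \sum_(TB : {set V}) \sum_(TA | validT l TB TA) f TA TB.
Proof. by rewrite exch; apply: eq_bigr => TB _; apply: eq_bigl => TA; rewrite valid_sym. Qed.

Lemma lin3 (f g h : {set V} -> {set V} -> R) (a b : R) :
  \sum_(TA : {set V}) \sum_(TB | validT l TA TB) (a * f TA TB + b * (g TA TB + h TA TB)) =
  a * \sum_(TA : {set V}) \sum_(TB | validT l TA TB) f TA TB +
  b * (\sum_(TA : {set V}) \sum_(TB | validT l TA TB) g TA TB +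
       \sum_(TA : {set V}) \sum_(TB | validT l TA TB) h TA TB).
Proof.
rewrite mulrDr !mulr_sumr -!big_split /=; apply: eq_bigr => TA _.
rewrite !mulr_sumr -!big_split /=; apply: eq_bigr => TB _; by rewrite mulrDr.
Qed.

Lemma lin1 (f : {set V} -> {set V} -> R) (a : R) :
  \sum_(TA : {set V}) \sum_(TB | validT l TA TB) (a * f TA TB) =
  a * \sum_(TA : {set V}) \sum_(TB | validT l TA TB) f TA TB.
Proof. by rewrite mulr_sumr; apply: eq_bigr => TA _; rewrite mulr_sumr. Qed.

Lemma rect (A B : pred {set V}) :
  729 * Mes R l false (fun x y => A x && B y) <=
  1210 * Mes R l true (fun x y => A x && B y) +
  1620 * (l%:R * B0 R l k * \sum_(Q : {set V} | #|Q| == l2) c).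
Proof.
rewrite !Mes_rect.
set Y := \sum_(Q : {set V} | #|Q| == l2) c.
pose f0 := fun TA TB => cnt R l false A TA TB * cnt R l false B TB TA.
pose f1 := fun TA TB => cnt R l true A TA TB * cnt R l true B TB TA.
pose gA := fun TA TB => if badS R l A TA TB then cnt R l false A TA TB * cnt R l false B TB TA else 0.
pose gB := fun TA TB => if badS R l B TB TA then cnt R l false B TB TA * cnt R l false A TA TB else 0.
have term : forall TA TB : {set V},
  81 * f0 TA TB <= 121 * f1 TA TB + 81 * (gA TA TB + gB TA TB).
  move=> TA TB; rewrite /f0 /f1 /gA /gB.
  have a0 := cnt_ge0 R l false A TA TB; have a1 := cnt_ge0 R l true A TA TB.
  have b0 := cnt_ge0 R l false B TB TA; have b1 := cnt_ge0 R l true B TB TA.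
  have p1 : 0 <= cnt R l true A TA TB * cnt R l true B TB TA by apply: mulr_ge0.
  have p0 : 0 <= cnt R l false A TA TB * cnt R l false B TB TA by apply: mulr_ge0.
  case: (boolP (badS R l A TA TB)) => hA; case: (boolP (badS R l B TB TA)) => hB; try nra.
  move: hA hB; rewrite /badS -!leNgt => hA hB.
  have hA' : 9 * cnt R l false A TA TB <= 11 * cnt R l true A TA TB by lra.
  have hB' : 9 * cnt R l false B TB TA <= 11 * cnt R l true B TB TA by lra.
  have : (9 * cnt R l false A TA TB) * (9 * cnt R l false B TB TA) <=
         (11 * cnt R l true A TA TB) * (11 * cnt R l true B TB TA).
    by apply: ler_pM => //; apply: mulr_ge0 => //; lra.
  nra.
have S1 : \sum_(TA : {set V}) \sum_(TB | validT l TA TB) (81 * f0 TA TB) <=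
  \sum_(TA : {set V}) \sum_(TB | validT l TA TB) (121 * f1 TA TB + 81 * (gA TA TB + gB TA TB)).
  by apply: ler_sum => TA _; apply: ler_sum => TB _; apply: term.
rewrite lin1 lin3 in S1.
have hA := badbound A B.
have hB := badbound B A.
rewrite -swapT in hB.
have e : \sum_(P : {set V}) \sum_(Q | validT l P Q) cnt R l false B P Q * cnt R l false A Q P =
         \sum_(TA : {set V}) \sum_(TB | validT l TA TB) f0 TA TB.
  rewrite swapT; apply: eq_bigr => TB _; apply: eq_bigr => TA _; by rewrite mulrC.
rewrite e in hB.
move: S1 hA hB; rewrite /f0 /f1 /gA /gB -/Y => S1 hA hB.
nra.
Qed.
Definition gam (k : nat) : R := (19/20) ^+ (15 * k) / (9/10) ^+ (7 * k).

Lemma gam_ge0 : 0 <= gam k.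
Proof. by rewrite /gam; apply: divr_ge0; apply: exprn_ge0; lra. Qed.

Lemma YZ :
  l%:R * B0 R l k * \sum_(Q : {set V} | #|Q| == l2) c <=
  28 * (2 * l).+1%:R * gam k * \sum_(TB : {set V} | #|TB| == l2) (2 * l)%:R * (c * c).
Proof.
have hb : (4 : R) ^+ l <= (2 * l).+1%:R * ((2 * l)%:R * c) / l%:R.
  have h1 := bin_bound l; rewrite -(bin_half l0) in h1.
  have : ((4 ^ l)%:R : R) <= ((2 * l).+1 * ('C((2 * l).-1, l) * 2))%:R by rewrite ler_nat.
  rewrite natrX !natrM => h2.
  have lp : (0 : R) < l%:R by rewrite ltr0n.
  rewrite ler_pdivlMr //; nra.
have -> : \sum_(TB : {set V} | #|TB| == l2) (2 * l)%:R * (c * c) =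
          ((2 * l)%:R * c) * \sum_(Q : {set V} | #|Q| == l2) c.
  by rewrite mulr_sumr; apply: eq_bigr => TB _; rewrite mulrA.
set Y := \sum_(Q : {set V} | #|Q| == l2) c.
have Y0 : 0 <= Y by apply: sumr_ge0 => Q _; apply: ler0n.
have g0 := gam_ge0.
have lp : (0 : R) < l%:R by rewrite ltr0n.
rewrite /B0 -/(gam k).
have -> : 28 * 4 ^+ l * (19 / 20) ^+ (15 * k) / (9 / 10) ^+ (7 * k) = 28 * 4 ^+ l * gam k.
  by rewrite /gam mulrA.
have h4 : 0 <= (4 : R) ^+ l by apply: exprn_ge0; lra.
have c0 : (0 : R) <= c by apply: ler0n.
have : l%:R * 4 ^+ l <= (2 * l).+1%:R * ((2 * l)%:R * c).
  by move: hb; rewrite ler_pdivlMr // mulrC.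
move=> h; have hY : 0 <= 28 * gam k * Y by apply: mulr_ge0 => //; apply: mulr_ge0 => //; lra.
nra.
Qed.

Lemma pow_max (a b : nat) : ((2 : R) ^+ a + 2 ^+ b <= 2 ^+ (maxn a b).+1).
Proof.
have ha : (2 : R) ^+ a <= 2 ^+ (maxn a b) by apply: ler_weXn2l; [lra | apply: leq_maxl].
have hb : (2 : R) ^+ b <= 2 ^+ (maxn a b) by apply: ler_weXn2l; [lra | apply: leq_maxr].
rewrite exprS; lra.
Qed.

Lemma Mes_ext e (E E' : {set V} -> {set V} -> bool) :
  (forall TA TB x y, validT l TA TB -> okE l e TA TB x -> okE l e TB TA y -> E x y = E' x y) ->
  Mes R l e E = Mes R l e E'.
Proof.
move=> h; apply: eq_bigr => TA _; apply: eq_bigr => TB vT; apply: eq_bigr => x ox.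
by apply: eq_bigr => y oy; rewrite (h TA TB x y).
Qed.

Lemma Mes_split e (E C : {set V} -> {set V} -> bool) :
  Mes R l e E = Mes R l e (fun x y => E x y && C x y) + Mes R l e (fun x y => E x y && ~~ C x y).
Proof.
rewrite /Mes -big_split; apply: eq_bigr => TA _; rewrite -big_split; apply: eq_bigr => TB _.
rewrite -big_split; apply: eq_bigr => x _; rewrite -big_split; apply: eq_bigr => y _ /=.
by case: (E x y); case: (C x y); rewrite /= ?addr0 ?add0r.
Qed.

Lemma Mes_ge0 e (E : {set V} -> {set V} -> bool) : 0 <= Mes R l e E.
Proof.
by apply: sumr_ge0 => TA _; apply: sumr_ge0 => TB _; apply: sumr_ge0 => x _;
   apply: sumr_ge0 => y _; apply: ler0n.
Qed.

Variables (X Y : Type) (gx : {set V} -> X) (gy : {set V} -> Y).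

Lemma proto (q : protocol X Y) (A B : pred {set V}) :
  729 * Mes R l false (fun x y => [&& A x, B y & run q (gx x) (gy y)]) <=
  1210 * Mes R l true (fun x y => [&& A x, B y & run q (gx x) (gy y)]) +
  2 ^+ depth q * (1620 * (l%:R * B0 R l k * \sum_(Q : {set V} | #|Q| == l2) c)).
Proof.
set D := 1620 * _.
have D0 : 0 <= D.
  apply: mulr_ge0; first lra.
  apply: mulr_ge0; [apply: mulr_ge0; [apply: ler0n | apply: B0_ge0] | apply: sumr_ge0 => Q _; apply: ler0n].
elim: q A B => [b|f p0 IH0 p1 IH1|g p0 IH0 p1 IH1] A B /=.
- case: b.
    rewrite expr0 mul1r.
    rewrite (@Mes_ext false _ (fun x y => A x && B y)); last by move=> *; rewrite andbT.
    rewrite (@Mes_ext true _ (fun x y => A x && B y)); last by move=> *; rewrite andbT.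
    exact: rect.
  have z : forall e, Mes R l e (fun x y => [&& A x, B y & false]) = 0.
    move=> e; rewrite /Mes big1 // => TA _; rewrite big1 // => TB _; rewrite big1 // => x _.
    by rewrite big1 // => y _; rewrite !andbF.
  rewrite !z !mulr0 add0r; apply: mulr_ge0 => //; apply: exprn_ge0; lra.
- set F := fun x y => [&& A x, B y & if f (gx x) then run p1 (gx x) (gy y) else run p0 (gx x) (gy y)].
  have sp : forall e, Mes R l e F =
     Mes R l e (fun x y => [&& A x && f (gx x), B y & run p1 (gx x) (gy y)]) +
     Mes R l e (fun x y => [&& A x && ~~ f (gx x), B y & run p0 (gx x) (gy y)]).
    move=> e; rewrite (Mes_split e F (fun x _ => f (gx x))); congr (_ + _); apply: Mes_ext => TA TB x y _ _ _;
    by rewrite /F; case: (A x); case: (B y); case: (f (gx x)); rewrite /= ?andbT ?andbF.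
  rewrite !sp.
  have h1 := IH1 (fun x => A x && f (gx x)) B.
  have h0 := IH0 (fun x => A x && ~~ f (gx x)) B.
  have pm := pow_max (depth p0) (depth p1).
  have : (2 ^+ depth p1 + 2 ^+ depth p0) * D <= 2 ^+ (maxn (depth p0) (depth p1)).+1 * D.
    by apply: ler_wpM2r => //; rewrite addrC.
  move=> h; lra.
- set F := fun x y => [&& A x, B y & if g (gy y) then run p1 (gx x) (gy y) else run p0 (gx x) (gy y)].
  have sp : forall e, Mes R l e F =
     Mes R l e (fun x y => [&& A x, B y && g (gy y) & run p1 (gx x) (gy y)]) +
     Mes R l e (fun x y => [&& A x, B y && ~~ g (gy y) & run p0 (gx x) (gy y)]).
    move=> e; rewrite (Mes_split e F (fun _ y => g (gy y))); congr (_ + _); apply: Mes_ext => TA TB x y _ _ _;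
    by rewrite /F; case: (A x); case: (B y); case: (g (gy y)); rewrite /= ?andbT ?andbF.
  rewrite !sp.
  have h1 := IH1 A (fun y => B y && g (gy y)).
  have h0 := IH0 A (fun y => B y && ~~ g (gy y)).
  have pm := pow_max (depth p0) (depth p1).
  have : (2 ^+ depth p1 + 2 ^+ depth p0) * D <= 2 ^+ (maxn (depth p0) (depth p1)).+1 * D.
    by apply: ler_wpM2r => //; rewrite addrC.
  move=> h; lra.
Qed.
Lemma supp0 (TA TB x y : {set V}) :
  validT l TA TB -> ok0 l TA x -> ok0 l TB y -> [disjoint x & y].
Proof.
case/and3P => _ _ dAB /andP[xA _] /andP[yB _].
by apply: (disjointWl xA); rewrite disjoint_sym; apply: (disjointWl yB); rewrite disjoint_sym.
Qed.

Lemma supp1 (TA TB x y : {set V}) :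
  validT l TA TB -> ok1 l TA TB x -> ok1 l TB TA y -> ~~ [disjoint x & y].
Proof.
case/and3P => /eqP cA /eqP cB dAB /and3P[xB _ xA] /and3P[yA _ yB].
have [v vx vA] := subsetPn xA.
have [u uy uB] := subsetPn yB.
have vB : v \notin TB by have := subsetP xB v vx; rewrite inE.
have uA : u \notin TA by have := subsetP yA u uy; rewrite inE.
have : #|~: (TA :|: TB)| == 1%N.
  rewrite cardsCs setCK cV cardsU (disjoint_setI0 dAB) cards0 cA cB; apply/eqP; lia.
case/cards1P => w ew.
have inK : forall z, z \notin TA -> z \notin TB -> z = w.
  move=> z zA zB; apply/set1P; rewrite -ew !inE.
  by rewrite (negbTE zA) (negbTE zB).
have uv : u = v by rewrite (inK u uA uB) (inK v vA vB).
apply/negP => dis; have := disjointFr dis vx; by rewrite -uv uy.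
Qed.

Lemma Zpos : 0 < \sum_(TB : {set V} | #|TB| == l2) (2 * l)%:R * (c * c).
Proof.
have [T0 _ cT0] : exists2 T0 : {set V}, T0 \subset setT & #|T0| = l2.
  by apply: exists_subset_card; rewrite cardsT cV; lia.
rewrite (bigD1 T0) /=; last by rewrite cT0.
have cp : (0 : R) < c by rewrite ltr0n bin_gt0; lia.
have lp : (0 : R) < (2 * l)%:R by rewrite ltr0n; lia.
have r0 : 0 <= \sum_(i : {set V} | (#|i| == l2) && (i != T0)) (2 * l)%:R * (c * c).
  by apply: sumr_ge0 => i _; apply: mulr_ge0; [apply: ltW | apply: mulr_ge0; apply: ltW].
have : 0 < (2 * l)%:R * (c * c) by apply: mulr_gt0 => //; apply: mulr_gt0.
lra.
Qed.

Definition MesR e (h : {set V} -> {set V} -> R) : R :=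
  \sum_(TA : {set V}) \sum_(TB | validT l TA TB)
    \sum_(x | okE l e TA TB x) \sum_(y | okE l e TB TA y) h x y.

Lemma MesR_lin e (s : seq (R * protocol X Y)) (w : R * protocol X Y -> R)
  (h : R * protocol X Y -> {set V} -> {set V} -> R) :
  \sum_(q <- s) w q * MesR e (h q) = MesR e (fun x y => \sum_(q <- s) w q * h q x y).
Proof.
rewrite /MesR; under eq_bigr do rewrite mulr_sumr.
rewrite exchange_big; apply: eq_bigr => TA _.
under eq_bigr do rewrite mulr_sumr.
rewrite exchange_big; apply: eq_bigr => TB _.
under eq_bigr do rewrite mulr_sumr.
rewrite exchange_big; apply: eq_bigr => x _.
under eq_bigr do rewrite mulr_sumr.
by rewrite exchange_big.
Qed.

Lemma MesR_le e (h h' : {set V} -> {set V} -> R) :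
  (forall x y, h x y <= h' x y) -> MesR e h <= MesR e h'.
Proof.
move=> H; apply: ler_sum => TA _; apply: ler_sum => TB _; apply: ler_sum => x _.
by apply: ler_sum => y _.
Qed.

Lemma MesR_const e (a : R) : MesR e (fun _ _ => a) = a * Mes R l e (fun _ _ : {set V} => true).
Proof.
rewrite /MesR /Mes mulr_sumr; apply: eq_bigr => TA _; rewrite mulr_sumr; apply: eq_bigr => TB _.
rewrite mulr_sumr; apply: eq_bigr => x _; rewrite mulr_sumr; apply: eq_bigr => y _.
by rewrite mulr1.
Qed.

Lemma sum_le_max (s : seq (R * protocol X Y)) (W : protocol X Y -> R) (m : R) :
  (forall q, List.In q s -> W q.2 <= m) -> all (fun q => 0 <= q.1) s ->
  \sum_(q <- s) q.1 * W q.2 <= m * \sum_(q <- s) q.1.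
Proof.
elim: s => [|q s IH] H /=; first by rewrite !big_nil mulr0.
case/andP => q0 qs; rewrite !big_cons mulrDr.
apply: lerD; last by apply: IH => // q' q's; apply: H; right.
by rewrite mulrC; apply: ler_wpM2r => //; apply: H; left.
Qed.

Lemma argmax (s : seq (R * protocol X Y)) (W : protocol X Y -> R) :
  s <> [::] -> exists q, List.In q s /\ forall q', List.In q' s -> W q'.2 <= W q.2.
Proof.
elim: s => [|x s IH] // _.
case: s IH => [|y s] IH.
  by exists x; split; [left | move=> q' [<-|[]]].
have [q [qin qmax]] := IH ltac:(by []).
case: (lerP (W q.2) (W x.2)) => h.
  exists x; split; first by left.
  by move=> q' [<-|q'in]; [ | apply: le_trans (qmax _ q'in) h].
exists q; split; first by right.
by move=> q' [<-|q'in]; [apply: ltW | apply: qmax].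
Qed.

Lemma depth_le (s : seq (R * protocol X Y)) q :
  List.In q s -> (depth q.2 <= \max_(q <- s) depth q.2)%N.
Proof.
elim: s => [|x s IH] //= [<-|qin]; rewrite big_cons.
  by apply: leq_maxl.
by apply: leq_trans (IH qin) (leq_maxr _ _).
Qed.
Lemma lower (P : rprotocol R X Y) (fn : X -> Y -> bool) :
  (forall x y : {set V}, fn (gx x) (gy y) = [disjoint x & y]) ->
  rcomputes P fn ->
  511 <= (9 * 1620 * 28) * 2 ^+ rcost P * (2 * l).+1%:R * gam k.
Proof.
move=> hfn [[Pnn Psum] Psucc].
set Z := \sum_(TB : {set V} | #|TB| == l2) (2 * l)%:R * (c * c).
have Z0 : 0 < Z := Zpos.
pose corr (q : protocol X Y) := fun x y => run q (gx x) (gy y) == fn (gx x) (gy y).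
pose W (q : protocol X Y) := 2/5 * Mes R l false (corr q) + 3/5 * Mes R l true (corr q).
have succ : forall e, \sum_(q <- P) q.1 * Mes R l e (corr q.2) >= 2/3 * Z.
  move=> e; rewrite (MesR_lin e P (fun q => q.1) (fun q x y => (corr q.2 x y)%:R)).
  rewrite /Z -(Zfull e) -MesR_const; apply: MesR_le => x y.
  have := Psucc (gx x) (gy y); rewrite /success_prob big_mkcond /=.
  congr (_ <= _); apply: eq_bigr => q _; rewrite /corr.
  by case: (run q.2 _ _ == _); rewrite ?mulr1 ?mulr0.
have avg : 2/3 * Z <= \sum_(q <- P) q.1 * W q.2.
  rewrite /W.
  have -> : \sum_(q <- P) q.1 * (2 / 5 * Mes R l false (corr q.2) + 3 / 5 * Mes R l true (corr q.2)) =
     2/5 * \sum_(q <- P) q.1 * Mes R l false (corr q.2) + 3/5 * \sum_(q <- P) q.1 * Mes R l true (corr q.2).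
    rewrite !mulr_sumr -big_split; apply: eq_bigr => q _ /=; rewrite mulrDr; congr (_ + _);
    by rewrite mulrCA.
  have := succ false; have := succ true; lra.
have Pne : P <> [::] by move=> P0; move: Psum; rewrite P0 big_nil => /eqP; rewrite eq_sym oner_eq0.
have [q [qin qmax]] := argmax W Pne.
have Wq : 2/3 * Z <= W q.2.
  apply: (le_trans avg); apply: (le_trans (sum_le_max qmax Pnn)).
  by rewrite Psum mulr1.
set d := depth q.2.
have h0 : Mes R l false (corr q.2) = Mes R l false (fun x y => [&& true, true & run q.2 (gx x) (gy y)]).
  apply: Mes_ext => TA TB x y vT ox oy; rewrite /corr hfn (supp0 vT ox oy).
  by case: (run _ _ _).
have h1 : Mes R l true (corr q.2) = Mes R l true (fun x y => ~~ [&& true, true & run q.2 (gx x) (gy y)]).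
  apply: Mes_ext => TA TB x y vT ox oy; rewrite /corr hfn (negbTE (supp1 vT ox oy)).
  by case: (run _ _ _).
have sp1 := Mes_split true (fun _ _ => true) (fun x y => [&& true, true & run q.2 (gx x) (gy y)]).
have sp0 := Mes_split false (fun _ _ => true) (fun x y => [&& true, true & run q.2 (gx x) (gy y)]).
rewrite /= !Zfull -/Z in sp1 sp0.
have pr := proto q.2 (fun _ => true) (fun _ => true).
have yz := YZ.
move: Wq; rewrite /W h0 h1 -/d => Wq.
set M0 := Mes R l false _ in pr sp0 Wq.
set M1 := Mes R l true (fun x y => [&& true, true & run q.2 (gx x) (gy y)]) in pr sp1 Wq.
set M1' := Mes R l true _ in sp1 Wq.
set M0' := Mes R l false _ in sp0.
set Yc := \sum_(Q : {set V} | #|Q| == l2) c in pr yz.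
set D := 1620 * (l%:R * B0 R l k * Yc) in pr.
have M0'0 : 0 <= M0' by apply: Mes_ge0.
have t0 : (0 : R) <= 2 ^+ d by apply: exprn_ge0; lra.
have G0 : (0 : R) <= (2 * l).+1%:R * gam k by apply: mulr_ge0; [apply: ler0n | apply: gam_ge0].
match goal with |- _ => idtac end. rewrite -/d in pr; rewrite -/Z in yz.
have s1 : 511 * Z <= 9 * (2 ^+ d * D) by lra.
have s2 : D <= (1620 * 28) * ((2 * l).+1%:R * gam k) * Z.
  rewrite /D; lra.
have s3 : 2 ^+ d * D <= 2 ^+ d * ((1620 * 28) * ((2 * l).+1%:R * gam k) * Z) by apply: ler_wpM2l.
have s4 : 511 <= (9 * 1620 * 28) * (2 ^+ d * ((2 * l).+1%:R * gam k)).
  have : 511 * Z <= ((9 * 1620 * 28) * (2 ^+ d * ((2 * l).+1%:R * gam k))) * Z by nra.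
  by rewrite ler_pM2r.
have s5 : (2 : R) ^+ d <= 2 ^+ rcost P.
  by apply: ler_weXn2l; [lra | apply: depth_le].
have : 2 ^+ d * ((2 * l).+1%:R * gam k) <= 2 ^+ rcost P * ((2 * l).+1%:R * gam k).
  by apply: ler_wpM2r.
move=> s6; rewrite -!mulrA; lra.
Qed.
End Main.
Definition rank_of (n : nat) (key : 'I_n -> nat) (a : 'I_n) : nat := #|[set b | (key b < key a)%N]|.

Lemma rank_lt (n : nat) (key : 'I_n -> nat) (a : 'I_n) : (rank_of key a < n)%N.
Proof.
rewrite /rank_of -[X in (_ < X)%N](card_ord n) -cardsT.
apply: proper_card; rewrite properE subsetT /=.
by apply/subsetPn; exists a; rewrite !inE ?ltnn.
Qed.

Lemma rank_mono (n : nat) (key : 'I_n -> nat) (a b : 'I_n) :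
  (key a < key b)%N -> (rank_of key a < rank_of key b)%N.
Proof.
move=> h; apply: proper_card; rewrite properE; apply/andP; split.
  by apply/subsetP => z; rewrite !inE => hz; apply: ltn_trans h.
by apply/subsetPn; exists a; rewrite !inE ?ltnn.
Qed.

Definition keyf (n : nat) (cat : 'I_n -> nat) (a : 'I_n) : nat := (cat a * n + a)%N.

Lemma keyf_inj (n : nat) (cat : 'I_n -> nat) : injective (keyf cat).
Proof.
move=> a b e; apply: val_inj => /=.
have := congr1 (fun z => z %% n)%N e; rewrite /keyf /=.
by rewrite !modnMDl !modn_small.
Qed.

Lemma rank_inj (n : nat) (cat : 'I_n -> nat) :
  injective (fun a : 'I_n => Ordinal (rank_lt (keyf cat) a)).
Proof.
move=> a b /(congr1 val) /= e.
case: (ltngtP (keyf cat a) (keyf cat b)) => h.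
- by have := rank_mono h; rewrite e ltnn.
- by have := rank_mono h; rewrite e ltnn.
- exact: keyf_inj h.
Qed.

Definition rperm (n : nat) (cat : 'I_n -> nat) : ranking n := perm (@rank_inj n cat).

Lemma prefers_rperm (n : nat) (cat : 'I_n -> nat) (a b : 'I_n) :
  prefers (rperm cat) a b = (keyf cat a < keyf cat b)%N.
Proof.
rewrite /prefers /rperm !permE /=.
case: (ltngtP (keyf cat a) (keyf cat b)) => h.
- by rewrite rank_mono.
- by apply/negbTE; rewrite -leqNgt ltnW // rank_mono.
- by rewrite (keyf_inj h) ltnn.
Qed.

Lemma prefers_cat (n : nat) (cat : 'I_n -> nat) (a h : 'I_n) :
  cat h = 1%N -> (cat a == 1%N) = (a == h) -> (cat a <= 2)%N ->
  prefers (rperm cat) a h = (cat a == 0%N).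
Proof.
move=> ch ca c2; rewrite prefers_rperm /keyf ch mul1n.
have an := ltn_ord a; have hn := ltn_ord h.
case: (eqVneq a h) ca => [-> | ah] ca.
  by rewrite ch mul1n ltnn.
move: c2 ca; case: (cat a) => [|[|[|//]]] //= _ _.
- by rewrite mul0n add0n; apply/idP; apply: leq_trans an (leq_addr _ _).
- by apply/negbTE; rewrite -leqNgt; lia.
Qed.
Definition emb (m : nat) (mu : {perm 'I_m.+1}) (j : nat) : 'I_m.+1 * 'I_m.+1 :=
  let w : 'I_m.+1 := inord (j %/ m) in (w, inord (bump (mu w) (j %% m))).

Lemma emb_offdiag (m : nat) (mu : {perm 'I_m.+1}) (j : nat) :
  (0 < m)%N -> (emb mu j).2 != mu (emb mu j).1.
Proof.
move=> m0; rewrite /emb /=.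
set w : 'I_m.+1 := inord (j %/ m).
apply/eqP => /(congr1 val) /=.
rewrite inordK; last first.
  have := ltn_pmod j m0; have := ltn_ord (mu w); rewrite /bump; case: (_ <= _)%N => /=; lia.
by move=> e; move: (neq_bump (mu w) (j %% m)); rewrite e eqxx.
Qed.

Lemma emb_inj (m : nat) (mu : {perm 'I_m.+1}) (j j' : nat) :
  (0 < m)%N -> (j < m.+1 * m)%N -> (j' < m.+1 * m)%N -> emb mu j = emb mu j' -> j = j'.
Proof.
move=> m0 hj hj' e.
have d1 : (j %/ m < m.+1)%N by rewrite ltn_divLR.
have d2 : (j' %/ m < m.+1)%N by rewrite ltn_divLR.
have ew : (j %/ m = j' %/ m)%N.
  have := congr1 (fun p => val p.1) e; rewrite /emb /= !inordK //.
have bnd : forall h : 'I_m.+1, forall t, (bump h (t %% m) < m.+1)%N.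
  move=> h t; have := ltn_pmod t m0; have := ltn_ord h; rewrite /bump; case: (_ <= _)%N => /=; lia.
have em : (j %% m = j' %% m)%N.
  have := congr1 (fun p => val p.2) e; rewrite /emb /= !inordK ?bnd //.
  rewrite ew => /(congr1 (unbump (mu (inord (j' %/ m))))); by rewrite !bumpK.
by rewrite (divn_eq j m) (divn_eq j' m) ew em.
Qed.

Section Red.
Variables (m N : nat) (mu : marriage m.+1).
Hypotheses (m0 : (0 < m)%N) (hN : (N <= m.+1 * m)%N).

Definition inX (x : {set 'I_N}) (w a : 'I_m.+1) :=
  [exists j : 'I_N, (j \in x) && (emb mu j == (w, a))].
Definition catW (x : {set 'I_N}) (w : 'I_m.+1) (a : 'I_m.+1) : nat :=
  if inX x w a then 0 else if a == mu w then 1 else 2.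
Definition catM (y : {set 'I_N}) (a : 'I_m.+1) (w : 'I_m.+1) : nat :=
  if inX y w a then 0 else if w == (mu^-1)%g a then 1 else 2.
Definition PWof (x : {set 'I_N}) : women_profile m.+1 := [ffun w => rperm (catW x w)].
Definition PMof (y : {set 'I_N}) : men_profile m.+1 := [ffun a => rperm (catM y a)].

Lemma inX_off x w a : inX x w a -> a != mu w.
Proof.
case/existsP => j /andP[_ /eqP e].
by have := emb_offdiag mu j m0; rewrite e.
Qed.

Lemma prefW x w a : prefers (PWof x w) a (mu w) = inX x w a.
Proof.
have h1 : inX x w (mu w) = false.
  by case: (boolP (inX x w (mu w))) => // hz; have := inX_off hz; rewrite eqxx.
rewrite ffunE prefers_cat.
- by rewrite /catW; case: ifP => //; case: ifP.
- by rewrite /catW h1 eqxx.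
- rewrite /catW; case: (boolP (inX x w a)) => hx /=.
    by symmetry; apply/negbTE; exact: inX_off hx.
  by case: ifP.
- by rewrite /catW; case: ifP => //; case: ifP.
Qed.

Lemma prefM y w a : prefers (PMof y a) w ((mu^-1)%g a) = inX y w a.
Proof.
have h2 : inX y ((mu^-1)%g a) a = false.
  by case: (boolP (inX y ((mu^-1)%g a) a)) => // hz; have := inX_off hz; rewrite permKV eqxx.
rewrite ffunE prefers_cat.
- by rewrite /catM; case: ifP => //; case: ifP.
- by rewrite /catM h2 eqxx.
- rewrite /catM; case: (boolP (inX y w a)) => hy /=.
    symmetry; apply/negbTE; apply: contra (inX_off hy) => /eqP ->; by rewrite permKV.
  by case: ifP.
- by rewrite /catM; case: ifP => //; case: ifP.
Qed.

Lemma blockingE x y w a : blocking mu (PWof x) (PMof y) w a = inX x w a && inX y w a.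
Proof. by rewrite /blocking prefW prefM. Qed.

Lemma stableE x y : stable mu (PWof x) (PMof y) = [disjoint x & y].
Proof.
apply/idP/idP.
  move=> st; rewrite disjoints_subset; apply/subsetP => j jx; rewrite inE; apply/negP => jy.
  move/forallP: st => /(_ (emb mu j).1) /forallP /(_ (emb mu j).2).
  rewrite blockingE => /negP; apply; apply/andP; split; apply/existsP; exists j;
  by rewrite ?jx ?jy -surjective_pairing eqxx.
move=> dis; apply/forallP => w; apply/forallP => a; rewrite blockingE.
apply/negP => /andP[/existsP[j /andP[jx /eqP ej]] /existsP[j' /andP[jy /eqP ej']]].
have jj : j = j'.
  apply: val_inj; apply: (@emb_inj m mu) => //.
  - exact: leq_trans (ltn_ord j) hN.
  - exact: leq_trans (ltn_ord j') hN.
  - by rewrite ej ej'.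
by move: (disjointFr dis jx); rewrite jj jy.
Qed.

End Red.
Lemma gam_half (R : realType) (k1 : nat) : gam R (23 * k1) <= (1/2 : R) ^+ k1.
Proof.
rewrite /gam.
have -> : (15 * (23 * k1) = (15 * 23) * k1)%N by lia.
have -> : (7 * (23 * k1) = (7 * 23) * k1)%N by lia.
rewrite !exprM -expr_div_n.
apply: lerXn2r; rewrite ?nnegrE.
- by apply: divr_ge0; apply: exprn_ge0; lra.
- lra.
have p : (0 : R) < (9/10) ^+ (7 * 23) by apply: exprn_gt0; lra.
rewrite ler_pdivrMr //.
all: lra.
Qed.

Lemma half_pow (R : realType) (a b : nat) : (a < b)%N -> (2 : R) ^+ a * (1/2) ^+ b <= 1/2.
Proof.
move=> ab; rewrite -(subnKC ab) exprD exprSr.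
have e : (2 : R) ^+ a * (1 / 2) ^+ a = 1.
  have h2 : (2 : R) * (1 / 2) = 1 by lra.
  by rewrite -exprMn h2 expr1n.
rewrite !mulrA e mul1r.
have : (1/2 : R) ^+ (b - a.+1) <= 1 by apply: exprn_ile1; lra.
have : (0 : R) <= (1/2 : R) ^+ (b - a.+1) by apply: exprn_ge0; lra.
lra.
Qed.

Lemma nat_bound (n l : nat) : (4 * l <= (n * (n - 1)).+1)%N -> ((2 * l).+1 <= 2 ^ (2 * n))%N.
Proof.
move=> h.
have h1 : (n < 2 ^ n)%N by apply: ltn_expl.
have h2 : ((2 * l).+1 <= n * n + 1)%N by nia.
have h3 : (n * n < 2 ^ n * 2 ^ n)%N by apply: ltn_mul.
have e : (2 ^ (2 * n) = 2 ^ n * 2 ^ n)%N by rewrite -expnD addnn mul2n.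
rewrite e; lia.
Qed.
Local Close Scope ring_scope.

Theorem corollary10 :
  exists k N : nat, 0 < k /\
    forall (n : nat), N <= n ->
    forall (mu : marriage n) (R : realType)
           (P : rprotocol R (women_profile n) (men_profile n)),
      rcomputes P (fun PW PM => stable mu PW PM) ->
      n ^ 2 <= k * rcost P.
Proof.
exists (552 * 100), (120 * 1000); split; first by [].
case=> [|m] hn mu R P hP; first by move: hn; rewrite leqn0.
set l := ((m.+1 * (m.+1 - 1)).+1 %/ 4).
have hl4 : 4 * l <= (m.+1 * (m.+1 - 1)).+1 by rewrite /l; lia.
set N := (4 * l).-1.
have m0 : 0 < m by lia.
have e1 : m.+1 - 1 = m by lia.
have hN : N <= m.+1 * m by rewrite /N; move: hl4; rewrite e1; lia.
set k1 := l %/ (69 * 100).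
set k := 23 * k1.
have l0 : 0 < l by rewrite /l; nia.
have cV : #|'I_N| = (4 * l).-1 by rewrite card_ord.
have k0 : 0 < k by rewrite /k /k1 /l; nia.
have kl : 300 * k <= l by rewrite /k /k1; lia.
have H := @lower R _ l k l0 cV k0 kl _ _ (PWof mu) (PMof mu) P (fun PW PM => stable mu PW PM)
  (fun x y => @stableE m N mu m0 hN x y) hP.
set d := rcost P in H *.
have g := gam_half R k1; rewrite -/k in g.
have b1 : (((2 * l).+1)%:R <= 2 ^+ (2 * m.+1) :> R)%R.
  by rewrite -natrX ler_nat; apply: nat_bound.
have b2 : (9 * 1620 * 28 <= 2 ^+ 19 :> R)%R by lra.
have key : (511 <= 2 ^+ (19 + d + 2 * m.+1) * (1/2) ^+ k1 :> R)%R.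
  apply: (le_trans H); rewrite !exprD.
  have t0 : (0 <= 2 ^+ d :> R)%R by apply: exprn_ge0; lra.
  have L0 : (0 <= ((2 * l).+1)%:R :> R)%R by apply: ler0n.
  apply: ler_pM.
  - apply: mulr_ge0 => //; apply: mulr_ge0 => //; lra.
  - exact: gam_ge0.
  - apply: ler_pM => //.
    + apply: mulr_ge0 => //; lra.
    + by apply: ler_pM => //; lra.
  - exact: g.
case: (leqP k1 (19 + d + 2 * m.+1)) => hk.
  move: hk; rewrite /k1 /l => hk; nia.
have := half_pow R hk; lra.
Qed.
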